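(* Let $T$ be a tree in which every element has at most countably many immediate successors. Then $T$ with the fine wedge topology is suborderable, i.e. homeomorphic to a subspace of a linearly ordered topological space.
   Context: A tree is a partially ordered set in which the set of predecessors of each element is well-ordered. $y$ is an immediate successor of $x$ if $x<y$ and there is no $z$ with $x<z<y$. For $t\in T$, $V_t=\{s\in T:s\ge t\}$. The fine wedge topology on $T$ has as subbase all sets $V_t$ and their complements $T\setminus V_t$. *)

(* Defs.v *)
From Stdlib Require Import List.

Set Implicit Arguments.

Section Trees.
Variable T : Type.
Variable le : T -> T -> Prop.

Definition lt (x y : T) : Prop := le x y /\ x <> y.

Definition partial_order : Prop :=
  (forall x, le x x) /\
  (forall x y, le x y -> le y x -> x = y) /\
  (forall x y z, le x y -> le y z -> le x z).

Definition well_ordered_subset (S : T -> Prop) : Prop :=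
  (forall x y, S x -> S y -> le x y \/ le y x) /\
  (forall A : T -> Prop, (forall x, A x -> S x) -> (exists x, A x) ->
     exists m, A m /\ forall x, A x -> le m x).

Definition is_tree : Prop :=
  partial_order /\ forall t, well_ordered_subset (fun s => lt s t).

Definition immediate_successor (x y : T) : Prop :=
  lt x y /\ ~ exists z, lt x z /\ lt z y.

Definition wedge (t : T) : T -> Prop := fun s => le t s.

Definition fine_wedge_subbasic (U : T -> Prop) : Prop :=
  exists t, (forall s, U s <-> wedge t s) \/ (forall s, U s <-> ~ wedge t s).
End Trees.

Definition generated_open (X : Type) (B : (X -> Prop) -> Prop)
  (U : X -> Prop) : Prop :=
  forall x, U x -> exists l : list (X -> Prop),
    (forall W, In W l -> B W /\ W x) /\
    (forall y, (forall W, In W l -> W y) -> U y).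

Definition countable_set (X : Type) (S : X -> Prop) : Prop :=
  exists f : X -> nat, forall x y, S x -> S y -> f x = f y -> x = y.

Definition strict_linear_order (L : Type) (ltL : L -> L -> Prop) : Prop :=
  (forall x, ~ ltL x x) /\
  (forall x y z, ltL x y -> ltL y z -> ltL x z) /\
  (forall x y, ltL x y \/ x = y \/ ltL y x).

Definition open_ray (L : Type) (ltL : L -> L -> Prop) (V : L -> Prop) : Prop :=
  exists a, (forall y, V y <-> ltL y a) \/ (forall y, V y <-> ltL a y).

Definition order_open (L : Type) (ltL : L -> L -> Prop) :=
  generated_open (open_ray ltL).

Definition embedding (X L : Type) (openX : (X -> Prop) -> Prop)
  (openL : (L -> Prop) -> Prop) (f : X -> L) : Prop :=
  (forall x y, f x = f y -> x = y) /\
  (forall U : X -> Prop,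
     openX U <-> exists V, openL V /\ forall x, U x <-> V (f x)).

Definition suborderable (X : Type) (openX : (X -> Prop) -> Prop) : Prop :=
  exists (L : Type) (ltL : L -> L -> Prop) (f : X -> L),
    strict_linear_order ltL /\ embedding openX (order_open ltL) f.

Definition fine_wedge_open (T : Type) (le : T -> T -> Prop) :=
  generated_open (fine_wedge_subbasic le).

(* Main.v *)
Require Import Defs.
Module LinOrd.
From mathcomp Require Import all_boot boolp wochoice.
Lemma exists_linear_order (T : Type) : exists R : T -> T -> Prop,
  (forall x, ~ R x x) /\ (forall x y z, R x y -> R y z -> R x z) /\
  (forall x y, R x y \/ x = y \/ R y x).
Proof.
pose T' := classicType T.
have [R wo] := well_ordering_principle T'.
have tot3 : forall x y z : T', exists m, (m = x \/ m = y \/ m = z) /\ R m x /\ R m y /\ R m z.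
  move=> x y z.
  have ne : nonempty [pred w : T' | (w == x) || (w == y) || (w == z)].
    by exists x; rewrite inE eqxx.
  have [m [[Am lb] _]] := wo _ ne.
  exists m; split.
    by move: Am; rewrite inE => /orP[/orP[]|] /eqP ->; auto.
  by split; [|split]; apply: lb; rewrite inE eqxx ?orbT.
have refl : forall x : T', R x x.
  by move=> x; have [m [Hm [Rmx _]]] := tot3 x x x; move: Rmx; case: Hm => [->|[->|->]].
have antis : forall x y : T', R x y -> R y x -> x = y.
  move=> x y Rxy Ryx.
  have ne : nonempty [pred w : T' | (w == x) || (w == y)].
    by exists x; rewrite inE eqxx.
  have [m [_ uniq]] := wo _ ne.
  have ex : minimum_of R [pred w : T' | (w == x) || (w == y)] x.
    split; first by rewrite inE eqxx.
    by move=> w; rewrite inE => /orP[] /eqP -> //; apply: refl.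
  have ey : minimum_of R [pred w : T' | (w == x) || (w == y)] y.
    split; first by rewrite inE eqxx orbT.
    by move=> w; rewrite inE => /orP[] /eqP -> //; apply: refl.
  by rewrite -(uniq _ ex) -(uniq _ ey).
exists (fun x y : T => R x y /\ x <> y); split; [|split].
- by move=> x [_ h].
- move=> x y z [Rxy nxy] [Ryz nyz].
  have [m [Hm [Rmx [Rmy Rmz]]]] := tot3 x y z.
  move: Rmx Rmy Rmz; case: Hm => [->|[->|->]] => Rmx Rmy Rmz.
  + split=> // exz; subst z; apply: nxy; exact: antis.
  + by case: nxy; apply: antis.
  + by case: nyz; apply: antis.
- move=> x y.
  have [m [Hm [Rmx [Rmy _]]]] := tot3 x y y.
  case: (boolp.pselect (x = y)) => [->|nxy]; first by right; left.
  move: Rmx Rmy; case: Hm => [->|[->|->]] => Rmx Rmy; [left|right;right|right;right]; split=> //; by move=> h; apply: nxy.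
Qed.
End LinOrd.


From Stdlib Require Import List Arith Lia Classical ClassicalEpsilon.

Inductive tag := Lo | Mid | Hi.
Definition tlt e f := (e = Lo /\ f <> Lo) \/ (e = Mid /\ f = Hi).
Lemma tlt_trans e f g : tlt e f -> tlt f g -> tlt e g.
Proof. unfold tlt; destruct e, f, g; intuition congruence. Qed.
Lemma tlt_irr e : ~ tlt e e.
Proof. unfold tlt; destruct e; intuition congruence. Qed.
Lemma tlt_nHi e f : tlt e f -> e <> Hi.
Proof. unfold tlt; destruct e, f; intuition congruence. Qed.
Lemma tlt_Hi e : e <> Hi -> tlt e Hi.
Proof. unfold tlt; destruct e; intuition congruence. Qed.
Lemma tlt_tot e f : tlt e f \/ e = f \/ tlt f e.
Proof. unfold tlt; destruct e, f; intuition congruence. Qed.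

Section Main.
Variable T : Type.
Variable le : T -> T -> Prop.
Hypothesis Hrefl : forall x, le x x.
Hypothesis Hanti : forall x y, le x y -> le y x -> x = y.
Hypothesis Htrans : forall x y z, le x y -> le y z -> le x z.
Hypothesis Hwo : forall t, well_ordered_subset le (fun s => lt le s t).
Variable R : T -> T -> Prop.
Hypothesis R_irr : forall x, ~ R x x.
Hypothesis R_trans : forall x y z, R x y -> R y z -> R x z.
Hypothesis R_tot : forall x y, R x y \/ x = y \/ R y x.
Variable idx : T -> T -> nat.
Hypothesis idx_inj : forall x a b, immediate_successor le x a ->
  immediate_successor le x b -> idx x a = idx x b -> a = b.

Notation lt := (Defs.lt le).
Notation succ := (immediate_successor le).

Lemma lt_le x y : lt x y -> le x y. Proof. intros [h _]; exact h. Qed.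
Lemma lt_irr x : ~ lt x x. Proof. intros [_ h]; auto. Qed.
Lemma le_lt_trans x y z : le x y -> lt y z -> lt x z.
Proof.
  intros h [h1 h2]; split; [eauto|]. intro e; subst. apply h2; auto.
Qed.
Lemma lt_le_trans x y z : lt x y -> le y z -> lt x z.
Proof.
  intros [h1 h2] h; split; [eauto|]. intro e; subst. apply h2; auto.
Qed.
Lemma lt_trans x y z : lt x y -> lt y z -> lt x z.
Proof. intros h1 h2; eapply lt_le_trans; [exact h1| apply lt_le; auto]. Qed.
Lemma le_lt_dec x y : le x y -> x = y \/ lt x y.
Proof. intros h; destruct (classic (x = y)); [left; auto| right; split; auto]. Qed.

Lemma comparable a b x : le a x -> le b x -> le a b \/ le b a.
Proof.
  intros ha hb.
  destruct (le_lt_dec _ _ ha) as [e|ha']; [subst; auto|].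
  destruct (le_lt_dec _ _ hb) as [e|hb']; [subst; auto|].
  destruct (Hwo x) as [Hl _]. apply Hl; auto.
Qed.

Lemma least_below (P : T -> Prop) x :
  (forall w, P w -> le w x) -> (exists w, P w) ->
  exists m, P m /\ forall w, P w -> le m w.
Proof.
  intros Hb Hne.
  destruct (classic (exists w, P w /\ lt w x)) as [[w [Pw lw]]|Hn].
  - destruct (Hwo x) as [_ Hm].
    destruct (Hm (fun w => P w /\ lt w x)) as [m [[Pm lm] Hmin]].
    { intros y [_ h]; exact h. }
    { exists w; auto. }
    exists m; split; auto. intros y Py.
    destruct (le_lt_dec _ _ (Hb _ Py)) as [e|h].
    + subst; apply lt_le; auto.
    + apply Hmin; auto.
  - destruct Hne as [w Pw]. exists x.
    assert (Px : P x).
    { destruct (le_lt_dec _ _ (Hb _ Pw)) as [e|h]; [subst; auto|].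
      exfalso; apply Hn; eauto. }
    split; auto. intros y Py.
    destruct (le_lt_dec _ _ (Hb _ Py)) as [e|h]; [subst; auto|].
    exfalso; apply Hn; eauto.
Qed.

Lemma child_below x y : lt x y -> exists c, succ x c /\ le c y.
Proof.
  intros hxy.
  destruct (least_below (fun w => lt x w /\ le w y) y) as [c [[h1 h2] h3]].
  { intros w [_ h]; auto. }
  { exists y; split; auto. }
  exists c; split; auto. split; auto.
  intros [z [hz1 hz2]].
  assert (le c z) by (apply h3; split; auto; apply lt_le; eapply lt_le_trans; eauto).
  apply (lt_irr c). eapply le_lt_trans; eauto.
Qed.

Lemma succ_pred p a : succ p a -> forall z, lt z a <-> le z p.
Proof.
  intros [hpa hn] z; split.
  - intros hza.
    destruct (comparable z p a (lt_le _ _ hza) (lt_le _ _ hpa)) as [h|h]; auto.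
    destruct (le_lt_dec _ _ h) as [e|h']; [subst; auto|].
    exfalso; apply hn; eauto.
  - intros h; eapply le_lt_trans; eauto.
Qed.

Definition sib a b := a <> b /\ forall z, lt z a <-> lt z b.

Lemma sib_sym a b : sib a b -> sib b a.
Proof. intros [h1 h2]; split; [auto|]. intro z; rewrite h2; tauto. Qed.

Lemma sib_succ p a b : sib a b -> succ p a -> succ p b.
Proof.
  intros [hne hs] hpa.
  pose proof (succ_pred _ _ hpa) as hp.
  split.
  - apply hs, hp, Hrefl.
  - intros [z [h1 h2]]. apply hs in h2. apply hp in h2.
    apply (lt_irr p). eapply lt_le_trans; eauto.
Qed.

Lemma succ_unique p q a : succ p a -> succ q a -> p = q.
Proof.
  intros hp hq.
  pose proof (succ_pred _ _ hp) as Hp.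
  pose proof (succ_pred _ _ hq) as Hq.
  apply Hanti; [apply Hq, Hp, Hrefl| apply Hp, Hq, Hrefl].
Qed.

Definition Sord a b := (exists p, succ p a /\ succ p b /\ idx p b < idx p a)
  \/ ((~ exists p, succ p a) /\ R a b).

Lemma Sord_total a b : sib a b -> Sord a b \/ Sord b a.
Proof.
  intros hs.
  destruct (classic (exists p, succ p a)) as [[p hp]|hn].
  - assert (hb : succ p b) by (eapply sib_succ; eauto).
    destruct (lt_eq_lt_dec (idx p a) (idx p b)) as [[h|h]|h].
    + right; left; exists p; auto.
    + exfalso; destruct hs as [hne _]; apply hne; eapply idx_inj; eauto.
    + left; left; exists p; auto.
  - assert (hn' : ~ exists p, succ p b).
    { intros [p hp]; apply hn; exists p; apply (sib_succ p b a); [apply sib_sym; auto| auto]. }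
    destruct (R_tot a b) as [h|[h|h]].
    + left; right; auto.
    + exfalso; destruct hs; auto.
    + right; right; auto.
Qed.

Lemma Sord_trans a b c : sib a b -> sib b c -> Sord a b -> Sord b c -> Sord a c.
Proof.
  intros hab hbc [[p [hpa [hpb hi]]]|[hn hr]] [[q [hqb [hqc hi']]]|[hn' hr']].
  - assert (p = q) by (eapply succ_unique; eauto). subst.
    left; exists q; split; auto; split; auto; lia.
  - exfalso; apply hn'; eauto.
  - exfalso; apply hn; exists q; apply (sib_succ q b a); [apply sib_sym; auto| auto].
  - right; split; eauto.
Qed.

Lemma Sord_irr a : ~ Sord a a.
Proof. intros [[p [_ [_ h]]]|[_ h]]; [lia| eapply R_irr; eauto]. Qed.

Lemma sib_trans a b c : sib a b -> sib b c -> a <> c -> sib a c.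
Proof. intros [_ h1] [_ h2] hne; split; auto. intro z; rewrite h1; auto. Qed.

Lemma sib_incomp a b x : sib a b -> le a x -> le b x -> False.
Proof.
  intros [hne hs] ha hb.
  destruct (comparable a b x ha hb) as [h|h].
  - destruct (le_lt_dec _ _ h) as [e|h']; [auto|].
    apply hs in h'. apply (lt_irr _ h').
  - destruct (le_lt_dec _ _ h) as [e|h']; [auto|].
    apply hs in h'. apply (lt_irr _ h').
Qed.

Definition inc x y := exists a b, le a x /\ le b y /\ sib a b /\ Sord a b.

Lemma inc_irr x : ~ inc x x.
Proof. intros [a [b [ha [hb [hs _]]]]]. eapply sib_incomp; eauto. Qed.

Lemma inc_trans x y z : inc x y -> inc y z -> inc x z.
Proof.
  intros [a [b [ha [hb [hab Sab]]]]] [b' [c [hb' [hc [hbc Sbc]]]]].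
  destruct (comparable b b' y hb hb') as [h|h];
    destruct (le_lt_dec _ _ h) as [e|h'].
  - subst b'.
    assert (a <> c).
    { intro e; subst c. apply (Sord_irr a). eapply Sord_trans; eauto. }
    exists a, c; split; [auto|split; [auto|split]].
    + apply sib_trans with b; auto.
    + eapply Sord_trans; eauto.
  -
    exists a, b; split; [auto|split; [|split; auto]].
    apply lt_le. apply (proj2 hbc) in h'. eapply lt_le_trans; eauto.
  - subst b'.
    assert (a <> c).
    { intro e; subst c. apply (Sord_irr a). eapply Sord_trans; eauto. }
    exists a, c; split; [auto|split; [auto|split]].
    + apply sib_trans with b; auto.
    + eapply Sord_trans; eauto.
  -
    exists b', c; split; [|split; [auto|split; auto]].
    apply lt_le. apply (proj2 hab) in h'. eapply lt_le_trans; eauto.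
Qed.

Lemma inc_monoL x x' y : inc x y -> le x x' -> inc x' y.
Proof. intros [a [b [ha [hb H]]]] h; exists a, b; split; eauto. Qed.
Lemma inc_monoR x y y' : inc x y -> le y y' -> inc x y'.
Proof. intros [a [b [ha [hb H]]]] h; exists a, b; split; eauto. Qed.

Lemma inc_downR x y z : inc x y -> le z y -> inc x z \/ lt z x.
Proof.
  intros [a [b [ha [hb [hab Sab]]]]] hz.
  destruct (comparable b z y hb hz) as [h|h].
  - left; exists a, b; auto.
  - destruct (le_lt_dec _ _ h) as [e|h']; [subst; left; exists a, b; auto|].
    right. apply (proj2 hab) in h'. eapply lt_le_trans; eauto.
Qed.

Lemma inc_downL x y z : inc x y -> le z x -> inc z y \/ lt z y.
Proof.
  intros [a [b [ha [hb [hab Sab]]]]] hz.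
  destruct (comparable a z x ha hz) as [h|h].
  - left; exists a, b; auto.
  - destruct (le_lt_dec _ _ h) as [e|h']; [subst; left; exists a, b; auto|].
    right. apply (proj2 hab) in h'. eapply lt_le_trans; eauto.
Qed.

Lemma inc_not_le x y : inc x y -> le x y -> False.
Proof. intros [a [b [ha [hb [hab _]]]]] h. apply (sib_incomp a b y hab); eauto. Qed.
Lemma inc_not_ge x y : inc x y -> le y x -> False.
Proof. intros [a [b [ha [hb [hab _]]]]] h. apply (sib_incomp a b x hab); eauto. Qed.

Lemma inc_total x y : ~ le x y -> ~ le y x -> inc x y \/ inc y x.
Proof.
  intros n1 n2.
  destruct (least_below (fun z => le z x /\ ~ le z y) x) as [a [[ha1 ha2] ha3]].
  { intros w [h _]; auto. } { exists x; auto. }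
  destruct (least_below (fun z => le z y /\ ~ le z x) y) as [b [[hb1 hb2] hb3]].
  { intros w [h _]; auto. } { exists y; auto. }
  assert (hs : sib a b).
  { split.
    - intro e; subst; auto.
    - intro z; split; intros hz.
      + assert (le z y).
        { destruct (classic (le z y)) as [h|h]; auto.
          exfalso. assert (le a z) by (apply ha3; split; auto; apply lt_le; eapply lt_le_trans; eauto).
          apply (lt_irr a); eapply le_lt_trans; eauto. }
        destruct (comparable z b y) as [h|h]; auto.
        * destruct (le_lt_dec _ _ h) as [e|h']; auto. subst z.
          exfalso; apply hb2; apply lt_le; eapply lt_le_trans; eauto.
        * exfalso; apply hb2. eapply Htrans; [exact h|]. apply lt_le; eapply lt_le_trans; eauto.
      + assert (le z x).
        { destruct (classic (le z x)) as [h|h]; auto.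
          exfalso. assert (le b z) by (apply hb3; split; auto; apply lt_le; eapply lt_le_trans; eauto).
          apply (lt_irr b); eapply le_lt_trans; eauto. }
        destruct (comparable z a x) as [h|h]; auto.
        * destruct (le_lt_dec _ _ h) as [e|h']; auto. subst z.
          exfalso; apply ha2; apply lt_le; eapply lt_le_trans; eauto.
        * exfalso; apply ha2. eapply Htrans; [exact h|]. apply lt_le; eapply lt_le_trans; eauto. }
  destruct (Sord_total a b hs) as [h|h].
  - left; exists a, b; auto.
  - right; exists b, a; split; [auto|split; [auto|split; [apply sib_sym|]]]; auto.
Qed.


Definition ltL (p q : T * tag) : Prop :=
  (fst p = fst q /\ tlt (snd p) (snd q)) \/ (lt (fst p) (fst q) /\ snd p <> Hi)
  \/ (lt (fst q) (fst p) /\ snd q = Hi) \/ inc (fst p) (fst q).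

Lemma ltL_irr p : ~ ltL p p.
Proof.
  destruct p as [x e]; unfold ltL; simpl.
  intros [[_ h]|[[h _]|[[h _]|h]]].
  - eapply tlt_irr; eauto.
  - eapply lt_irr; eauto.
  - eapply lt_irr; eauto.
  - eapply inc_irr; eauto.
Qed.

Lemma ltL_trans p q r : ltL p q -> ltL q r -> ltL p r.
Proof.
  destruct p as [x e], q as [y f], r as [z g]; unfold ltL; simpl.
  intros H1 H2.
  destruct H1 as [[e1 t1]|[[l1 n1]|[[l1 n1]|i1]]];
  destruct H2 as [[e2 t2]|[[l2 n2]|[[l2 n2]|i2]]].
  - subst; left; split; auto; eapply tlt_trans; eauto.
  - subst; right; left; split; auto; eapply tlt_nHi; eauto.
  - subst; right; right; left; auto.
  - subst; right; right; right; auto.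
  - subst; right; left; auto.
  - right; left; split; auto; eapply lt_trans; eauto.
  - subst g.
    destruct (comparable x z y (lt_le _ _ l1) (lt_le _ _ l2)) as [h|h];
      destruct (le_lt_dec _ _ h) as [ee|h'].
    + subst; left; split; auto; apply tlt_Hi; auto.
    + right; left; auto.
    + subst; left; split; auto; apply tlt_Hi; auto.
    + right; right; left; auto.
  - destruct (inc_downL y z x i2 (lt_le _ _ l1)) as [h|h].
    + right; right; right; auto.
    + right; left; auto.
  - subst; exfalso; eapply tlt_nHi; eauto.
  - congruence.
  - right; right; left; split; auto; eapply lt_trans; eauto.
  - right; right; right; eapply inc_monoL; eauto; apply lt_le; auto.
  - subst; right; right; right; auto.
  - right; right; right; eapply inc_monoR; eauto; apply lt_le; auto.
  - subst g. destruct (inc_downR x y z i1 (lt_le _ _ l2)) as [h|h].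
    + right; right; right; auto.
    + right; right; left; auto.
  - right; right; right; eapply inc_trans; eauto.
Qed.

Lemma ltL_tot p q : ltL p q \/ p = q \/ ltL q p.
Proof.
  destruct p as [x e], q as [y f]; unfold ltL; simpl.
  destruct (classic (x = y)) as [ee|ne].
  - subst. destruct (tlt_tot e f) as [h|[h|h]].
    + left; left; auto.
    + subst; right; left; auto.
    + right; right; left; auto.
  - destruct (classic (le x y)) as [hxy|nxy].
    + assert (lt x y) by (split; auto).
      destruct (classic (e = Hi)) as [eh|eh].
      * right; right; right; right; left; auto.
      * left; right; left; auto.
    + destruct (classic (le y x)) as [hyx|nyx].
      * assert (lt y x) by (split; auto).
        destruct (classic (f = Hi)) as [fh|fh].
        -- left; right; right; left; auto.
        -- right; right; right; left; auto.
      * destruct (inc_total x y nxy nyx) as [h|h].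
        -- left; right; right; right; auto.
        -- right; right; right; right; right; auto.
Qed.

Lemma ltL_strict : strict_linear_order ltL.
Proof.
  split; [exact ltL_irr| split; [exact ltL_trans| exact ltL_tot]].
Qed.

Lemma key0 x y : ltL (x,Lo) (y,Mid) -> ltL (y,Mid) (x,Hi) -> le x y.
Proof.
  unfold ltL; simpl.
  intros [[e _]|[[h _]|[[_ h]|h]]] H2; [subst; auto|apply lt_le; auto|discriminate|].
  exfalso.
  destruct H2 as [[e _]|[[h2 _]|[[h2 _]|h2]]].
  - subst; eapply inc_irr; eauto.
  - eapply inc_not_ge; eauto; apply lt_le; auto.
  - eapply inc_not_le; eauto; apply lt_le; auto.
  - eapply inc_irr; eapply inc_trans; eauto.
Qed.

Lemma le_Lo x y : le x y -> ltL (x,Lo) (y,Mid).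
Proof.
  intros h; unfold ltL; simpl.
  destruct (le_lt_dec _ _ h) as [e|h'].
  - subst; left; split; auto; left; split; congruence.
  - right; left; split; auto; congruence.
Qed.

Lemma below_mid a x : ltL a (x,Mid) -> a = (x,Lo) \/ ltL a (x,Lo).
Proof.
  destruct a as [y f]; unfold ltL; simpl.
  intros [[e h]|[[h n]|[[h n]|h]]].
  - subst; left; destruct f; unfold tlt in h; intuition congruence.
  - right; right; left; auto.
  - discriminate.
  - right; right; right; right; auto.
Qed.

Lemma min_lemma q0 b1 b2 : ltL q0 b1 -> ltL q0 b2 ->
  exists b, ltL q0 b /\ forall q, ltL q b -> ltL q b1 /\ ltL q b2.
Proof.
  intros h1 h2.
  destruct (ltL_tot b1 b2) as [h|[h|h]].
  - exists b1; split; auto; intros q hq; split; auto; eapply ltL_trans; eauto.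
  - subst; exists b2; split; auto.
  - exists b2; split; auto; intros q hq; split; auto; eapply ltL_trans; eauto.
Qed.

Lemma perW x W : fine_wedge_subbasic le W -> W x ->
  exists b, ltL (x,Mid) b /\ forall y, le x y -> ltL (y,Mid) b -> W y.
Proof.
  intros [t [HW|HW]] Wx; unfold wedge in HW.
  - exists (x,Hi); split.
    + left; simpl; split; auto; right; auto.
    + intros y hxy _. apply HW. apply HW in Wx. eauto.
  - apply HW in Wx.
    destruct (classic (le x t)) as [hxt|nxt].
    + exists (t,Lo); split.
      * right; left; simpl; split; [split; auto; intro; subst; auto|congruence].
      * intros y hxy hy. apply HW. intro hty.
        unfold ltL in hy; simpl in hy.
        destruct hy as [[e h]|[[h _]|[[_ h]|h]]].
        -- subst; destruct h as [[h _]|[_ h]]; discriminate.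
        -- apply (lt_irr y); eapply lt_le_trans; eauto.
        -- discriminate.
        -- eapply inc_not_ge; eauto.
    + exists (x,Hi); split.
      * left; simpl; split; auto; right; auto.
      * intros y hxy _. apply HW. intro hty.
        destruct (comparable t x y hty hxy); auto.
Qed.

Lemma fwd_list x l : (forall W, In W l -> fine_wedge_subbasic le W /\ W x) ->
  exists b, ltL (x,Mid) b /\ forall y, le x y -> ltL (y,Mid) b -> forall W, In W l -> W y.
Proof.
  induction l as [|W l IH]; intros Hl.
  - exists (x,Hi); split; [left; simpl; split; auto; right; auto|].
    intros y _ _ W [].
  - destruct IH as [b1 [hb1 H1]]. { intros W' h; apply Hl; right; auto. }
    destruct (Hl W (or_introl eq_refl)) as [hs hw].
    destruct (perW x W hs hw) as [b2 [hb2 H2]].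
    destruct (min_lemma _ _ _ hb1 hb2) as [b [hb Hb]].
    exists b; split; auto.
    intros y hxy hy W' [e|hin].
    + subst; apply H2; auto; apply Hb; auto.
    + apply H1; auto; apply Hb; auto.
Qed.

Lemma fwd U x : fine_wedge_open le U -> U x ->
  exists b, ltL (x,Mid) b /\ forall y, ltL (x,Lo) (y,Mid) -> ltL (y,Mid) b -> U y.
Proof.
  intros HU Ux.
  destruct (HU x Ux) as [l [hl1 hl2]].
  destruct (fwd_list x l hl1) as [b1 [hb1 H1]].
  assert (hx : ltL (x,Mid) (x,Hi)) by (left; simpl; split; auto; right; auto).
  destruct (min_lemma _ _ _ hb1 hx) as [b [hb Hb]].
  exists b; split; auto.
  intros y h1 h2. destruct (Hb _ h2) as [h3 h4].
  pose proof (key0 x y h1 h4) as hxy.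
  apply hl2. apply H1; auto.
Qed.

Lemma bwd_rays x l : (forall W, In W l -> open_ray ltL W /\ W (x,Mid)) ->
  exists b, ltL (x,Mid) b /\ forall q, ltL (x,Lo) q -> ltL q b -> forall W, In W l -> W q.
Proof.
  induction l as [|W l IH]; intros Hl.
  - exists (x,Hi); split; [left; simpl; split; auto; right; auto|].
    intros y _ _ W [].
  - destruct IH as [b1 [hb1 H1]]. { intros W' h; apply Hl; right; auto. }
    destruct (Hl W (or_introl eq_refl)) as [[a [HW|HW]] hw].
    + apply HW in hw.
      destruct (min_lemma _ _ _ hb1 hw) as [b [hb Hb]].
      exists b; split; auto.
      intros q h1 h2 W' [e|hin].
      * subst; apply HW; apply Hb; auto.
      * apply H1; auto; apply Hb; auto.
    + apply HW in hw.
      exists b1; split; auto.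
      intros q h1 h2 W' [e|hin].
      * subst; apply HW. destruct (below_mid a x hw) as [e|h]; [subst; auto|].
        eapply ltL_trans; eauto.
      * apply H1; auto.
Qed.

Lemma wedge_sub x : fine_wedge_subbasic le (wedge le x).
Proof. exists x; left; intro; tauto. Qed.
Lemma nwedge_sub c : fine_wedge_subbasic le (fun s => ~ le c s).
Proof. exists c; right; intro; unfold wedge; tauto. Qed.

Lemma children_list x k : exists l,
  (forall W, In W l -> fine_wedge_subbasic le W /\ W x) /\
  forall y, (forall W, In W l -> W y) -> forall c, succ x c -> idx x c < k -> ~ le c y.
Proof.
  induction k as [|k [l [H1 H2]]].
  - exists nil; split; [intros W []|]. intros; lia.
  - destruct (classic (exists c, succ x c /\ idx x c = k)) as [[c [hc ek]]|nc].
    + exists ((fun s => ~ le c s) :: l); split.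
      * intros W [e|hin]; [subst; split|auto].
        -- apply nwedge_sub.
        -- intro h. destruct hc as [[h1 h2] _]. apply h2; auto.
      * intros y hy c' hc' hk.
        destruct (Nat.eq_dec (idx x c') k) as [e|ne].
        -- assert (c' = c) by (eapply idx_inj; eauto; congruence). subst c'.
           apply (hy _ (or_introl eq_refl)).
        -- apply (H2 y); auto; [intros W h; apply hy; right; auto| lia].
    + exists l; split; auto.
      intros y hy c' hc' hk.
      destruct (Nat.eq_dec (idx x c') k) as [e|ne].
      * exfalso; apply nc; eauto.
      * apply (H2 y); auto; lia.
Qed.

Lemma bwd_final x b : ltL (x,Mid) b -> exists l,
  (forall W, In W l -> fine_wedge_subbasic le W /\ W x) /\
  forall y, (forall W, In W l -> W y) -> ltL (x,Lo) (y,Mid) /\ ltL (y,Mid) b.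
Proof.
  destruct b as [z g]; intros H.
  assert (Hw : forall W, In W (wedge le x :: nil) -> fine_wedge_subbasic le W /\ W x).
  { intros W [e|[]]; subst; split; [apply wedge_sub| unfold wedge; auto]. }
  unfold ltL in H; simpl in H.
  destruct H as [[e h]|[[h _]|[[h n]|h]]].
  - subst z. assert (g = Hi) by (destruct g; unfold tlt in h; intuition congruence). subst g.
    exists (wedge le x :: nil); split; auto.
    intros y hy. assert (hxy : le x y) by (apply (hy _ (or_introl eq_refl))).
    split; [apply le_Lo; auto|].
    destruct (le_lt_dec _ _ hxy) as [e|h'].
    + subst; left; simpl; split; auto; right; auto.
    + right; right; left; simpl; auto.
  - destruct (child_below x z h) as [s [hs hsz]].
    destruct (children_list x (idx x s)) as [l0 [H1 H2]].
    exists (wedge le x :: (fun w => ~ le s w) :: l0); split.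
    + intros W [e|[e|hin]]; subst.
      * split; [apply wedge_sub| unfold wedge; auto].
      * split; [apply nwedge_sub|]. intro h'. destruct hs as [[h1 h2] _]; apply h2; auto.
      * auto.
    + intros y hy.
      assert (hxy : le x y) by (apply (hy _ (or_introl eq_refl))).
      assert (nsy : ~ le s y) by (apply (hy _ (or_intror (or_introl eq_refl)))).
      split; [apply le_Lo; auto|].
      destruct (le_lt_dec _ _ hxy) as [e|h'].
      * subst; right; left; simpl; split; auto; congruence.
      * destruct (child_below x y h') as [c [hc hcy]].
        assert (ncs : c <> s) by (intro; subst; auto).
        assert (hcs : sib c s).
        { split; auto. intro w. rewrite (succ_pred _ _ hc), (succ_pred _ _ hs). tauto. }
        destruct (lt_eq_lt_dec (idx x c) (idx x s)) as [[hl|he]|hg].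
        -- exfalso. apply (H2 y) with c; auto. intros W hW; apply hy; right; right; auto.
        -- exfalso; apply ncs; eapply idx_inj; eauto.
        -- right; right; right; simpl.
           exists c, s; split; [auto|split; [auto|split; [auto|]]].
           left; exists x; auto.
  - subst g. exists (wedge le x :: nil); split; auto.
    intros y hy. assert (hxy : le x y) by (apply (hy _ (or_introl eq_refl))).
    split; [apply le_Lo; auto|].
    right; right; left; simpl; split; auto. eapply lt_le_trans; eauto.
  - exists (wedge le x :: nil); split; auto.
    intros y hy. assert (hxy : le x y) by (apply (hy _ (or_introl eq_refl))).
    split; [apply le_Lo; auto|].
    right; right; right; simpl. eapply inc_monoL; eauto.
Qed.

Lemma main_sub : suborderable (fine_wedge_open le).
Proof.
  exists (T * tag)%type, ltL, (fun x => (x, Mid)).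
  split; [exact ltL_strict|split].
  - intros x y h; injection h; auto.
  - intro U; split.
    + intros HU.
      exists (fun q => exists a b, ltL a q /\ ltL q b /\
                forall y, ltL a (y,Mid) -> ltL (y,Mid) b -> U y).
      split.
      * intros q [a [b [h1 [h2 h3]]]].
        exists ((fun w => ltL a w) :: (fun w => ltL w b) :: nil). split.
        -- intros W [e|[e|[]]]; subst; split; auto.
           ++ exists a; right; intro; tauto.
           ++ exists b; left; intro; tauto.
        -- intros y Hy. exists a, b. split; [apply (Hy _ (or_introl eq_refl))|].
           split; [apply (Hy _ (or_intror (or_introl eq_refl)))|auto].
      * intro x; split.
        -- intros Ux. destruct (fwd U x HU Ux) as [b [hb Hb]].
           exists (x,Lo), b; split; [|split; auto].
           left; simpl; split; auto; left; split; congruence.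
        -- intros [a [b [h1 [h2 h3]]]]. apply h3; auto.
    + intros [V [HV HUV]] x Ux.
      apply HUV in Ux.
      destruct (HV _ Ux) as [l [hl1 hl2]].
      destruct (bwd_rays x l hl1) as [b [hb Hb]].
      destruct (bwd_final x b hb) as [l' [hl'1 hl'2]].
      exists l'; split; auto.
      intros y hy. apply HUV. apply hl2.
      destruct (hl'2 y hy) as [h1 h2].
      apply Hb; auto.
Qed.

End Main.

Theorem theorem3p12 (T : Type) (le : T -> T -> Prop) :
  is_tree le ->
  (forall x : T, countable_set (immediate_successor le x)) ->
  suborderable (fine_wedge_open le).
Proof.
  intros [[Hr [Ha Ht]] Hw] Hc.
  destruct (LinOrd.exists_linear_order T) as [R [Ri [Rt Rto]]].
  pose (idx := fun x => proj1_sig (constructive_indefinite_description _ (Hc x))).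
  apply (main_sub T le Hr Ha Ht Hw R Ri Rt Rto idx).
  intros x a b ha hb e.
  exact (proj2_sig (constructive_indefinite_description _ (Hc x)) a b ha hb e).
Qed.
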